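(* Every interbank lending game $G=(m,n,\boldsymbol{c},\boldsymbol{d},r_{\max},r_{\min})$ has a unique pure Nash equilibrium.
   Context: An interbank lending game $G=(m,n,\boldsymbol{c},\boldsymbol{d},r_{\max},r_{\min})$ consists of positive integers $m,n$, budgets $\boldsymbol{c}\in\mathbb{R}_{>0}^m$, demands $\boldsymbol{d}\in\mathbb{R}_{>0}^n$ and reals $0<r_{\min}<r_{\max}$. The players are the lenders $L=\{1,\dots,m\}$; $B=\{1,\dots,n\}$ is the set of borrowers. Lender $i$'s strategy set is $S_i=\{s_i\in\mathbb{R}_{\ge0}^n:\sum_{j\in B}s_{ij}\le c_i\}$, the strategy space is $\boldsymbol{S}=\prod_{i\in L}S_i$ with elements $\boldsymbol{s}=(s_{ij})_{i\in L,j\in B}$. The interest rate of borrower $j$ is $r_j(\boldsymbol{s})=(r_{\min}-r_{\max})\frac{\sum_{i\in L}s_{ij}}{d_j}+r_{\max}$ and lender $i$'s utility is $u_i(\boldsymbol{s})=\sum_{j\in B}(r_j(\boldsymbol{s})-r_{\min})s_{ij}$. A pure Nash equilibrium is a profile $\boldsymbol{s}^*\in\boldsymbol{S}$ such that $u_i(\boldsymbol{s}^* )\ge u_i(s_i,\boldsymbol{s}^*_{-i})$ for every $i\in L$ and every $s_i\in S_i$, where $(s_i,\boldsymbol{s}^*_{-i})$ denotes $\boldsymbol{s}^*$ with lender $i$'s strategy replaced by $s_i$. *)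

(* Defs.v *)
From HB Require Import structures.
From mathcomp Require Import all_boot all_order all_algebra.
From mathcomp Require Import reals.
Set Implicit Arguments. Unset Strict Implicit. Unset Printing Implicit Defensive.
Import Order.TTheory GRing.Theory Num.Theory.
Local Open Scope ring_scope.

(* Interbank lending game G = (m, n, c, d, rmax, rmin): lenders 'I_m,
   borrowers 'I_n. A strategy profile is s : 'M[R]_(m, n), where s i j is
   the amount lender i lends to borrower j. *)

Definition feasible_row (R : realType) (n : nat) (ci : R) (si : 'I_n -> R) : Prop :=
  (forall j, 0 <= si j) /\ \sum_(j < n) si j <= ci.

Definition feasible (R : realType) (m n : nat) (c : 'I_m -> R) (s : 'M[R]_(m, n)) : Prop :=
  forall i, feasible_row (c i) (fun j => s i j).

Definition rate (R : realType) (m n : nat) (d : 'I_n -> R) (rmax rmin : R)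
  (s : 'M[R]_(m, n)) (j : 'I_n) : R :=
  (rmin - rmax) * ((\sum_(i < m) s i j) / d j) + rmax.

Definition utility (R : realType) (m n : nat) (d : 'I_n -> R) (rmax rmin : R)
  (s : 'M[R]_(m, n)) (i : 'I_m) : R :=
  \sum_(j < n) (rate d rmax rmin s j - rmin) * s i j.

Definition deviate (R : realType) (m n : nat) (s : 'M[R]_(m, n)) (i : 'I_m)
  (si : 'I_n -> R) : 'M[R]_(m, n) :=
  \matrix_(k, j) if k == i then si j else s k j.

Definition pure_NE (R : realType) (m n : nat) (c : 'I_m -> R) (d : 'I_n -> R)
  (rmax rmin : R) (s : 'M[R]_(m, n)) : Prop :=
  feasible c s /\
  forall (i : 'I_m) (si : 'I_n -> R), feasible_row (c i) si ->
    utility d rmax rmin (deviate s i si) i <= utility d rmax rmin s i.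

(* Main.v *)
Require Import Defs.
From HB Require Import structures.
From mathcomp Require Import all_boot all_order all_algebra.
From mathcomp Require Import reals.
From mathcomp Require Import all_classical all_analysis.
From mathcomp Require Import ring lra.
Import Order.TTheory GRing.Theory Num.Theory.
Import numFieldNormedType.Exports.
Local Open Scope ring_scope.

Section Topo.
Local Open Scope classical_set_scope.
Variable R : realType.

Lemma cont_add (T : topologicalType) (f g : T -> R) :
  continuous f -> continuous g -> continuous (fun x => f x + g x).
Proof. by move=> cf cg x; exact: (continuousD (cf x) (cg x)). Qed.

Lemma cont_mul (T : topologicalType) (f g : T -> R) :
  continuous f -> continuous g -> continuous (fun x => f x * g x).
Proof. by move=> cf cg x; exact: (continuousM (cf x) (cg x)). Qed.

Lemma cont_opp (T : topologicalType) (f : T -> R) :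
  continuous f -> continuous (fun x => - f x).
Proof. by move=> cf x; exact: (continuousN (cf x)). Qed.

Lemma cont_cst (T : topologicalType) (a : R) : continuous (fun _ : T => a).
Proof. exact: cst_continuous. Qed.

Lemma cont_sum (T : topologicalType) (I : Type) (r : seq I) (P : pred I) (F : I -> T -> R) :
  (forall i, continuous (F i)) -> continuous (fun x => \sum_(i <- r | P i) F i x).
Proof.
move=> cF; elim: r => [|a r IH].
  under eq_fun do rewrite big_nil; exact: cont_cst.
under eq_fun do rewrite big_cons.
case: (P a) => //; exact: cont_add.
Qed.

Lemma cont_vec m n (i : 'I_m) (j : 'I_n) :
  continuous (fun v : 'rV[R]_(m * n) => vec_mx v i j).
Proof.
under eq_fun do rewrite mxE.
exact: (@coord_continuous R 1 (m * n) 0 (mxvec_index i j)).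
Qed.

Lemma exists_max m n (c : 'I_m -> R) (F : 'M[R]_(m, n) -> R) :
  (forall i, 0 <= c i) -> continuous (fun v : 'rV[R]_(m * n) => F (vec_mx v)) ->
  exists2 s, feasible c s & forall t, feasible c t -> F t <= F s.
Proof.
move=> c0 cF.
pose A := [set v : 'rV[R]_(m * n) | feasible c (vec_mx v)].
pose C := \sum_(i < m) c i.
have A0 : A !=set0.
  exists 0; rewrite /A /= => i; split => [j|]; first by rewrite !mxE.
  under eq_bigr do rewrite !mxE.
  by rewrite big1_eq; exact: c0.
have Asub : A `<=` [set v : 'rV[R]_(m * n) | forall k, `[0, C]%classic (v ord0 k)].
  move=> v Av k; case/mxvec_indexP: k => i j.
  have [h1 h2] := Av i.
  have := h1 j; rewrite mxE => vij0.
  rewrite /= in_itv /= vij0 /=.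
  apply: (le_trans _ (le_trans h2 _)).
    rewrite (bigD1 j) //= mxE lerDl; apply: sumr_ge0 => k _; exact: h1.
  rewrite /C (bigD1 i) //= lerDl; apply: sumr_ge0 => k _; exact: c0.
have Acl : closed A.
  have -> : A = \bigcap_(i in [set: 'I_m])
      ((\bigcap_(j in [set: 'I_n]) [set v : 'rV[R]_(m * n) | 0 <= vec_mx v i j])
       `&` [set v | \sum_(j < n) vec_mx v i j <= c i]).
    apply/seteqP; split => v /=.
      by move=> Av i _; have [h1 h2] := Av i; split => // j _; exact: h1.
    move=> H i; have [H1 H2] := H i I; split => // j; exact: H1.
  apply: closed_bigI => i _; apply: closedI.
    apply: closed_bigI => j _.
    apply: (@preimage_closed _ _ (fun v : 'rV[R]_(m * n) => vec_mx v i j) [set x | 0 <= x]).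
      by move=> x _; apply: cont_vec.
    exact: closed_ge.
  apply: (@preimage_closed _ _ (fun v : 'rV[R]_(m * n) => \sum_(j < n) vec_mx v i j) [set x | x <= c i]).
    by move=> x _; apply: cont_sum => j; apply: cont_vec.
  exact: closed_le.
have Acp : compact A.
  apply: (subclosed_compact Acl _ Asub).
  apply: (@rV_compact _ _ (fun=> `[0, C]%classic)) => _; exact: segment_compact.
have cFA : {within A, continuous (fun v => F (vec_mx v))} by apply: continuous_subspaceT.
have [v vA vmax] := compact_EVT_max A0 Acp cFA.
exists (vec_mx v); first by move: vA; rewrite inE.
move=> t ft; rewrite -(mxvecK t); apply: vmax; rewrite inE /A /= mxvecK //.
Qed.

End Topo.

Ltac cont := repeat first [ apply: cont_sum => ? | apply: cont_add | apply: cont_opp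
  | apply: cont_mul | apply: cont_vec | apply: cont_cst ].


Section Alg.
Variables (R : realType) (m n : nat) (d : 'I_n -> R).

Definition Yo (s : 'M[R]_(m, n)) i j := \sum_(k < m | k != i) s k j.
Definition Qo (s : 'M[R]_(m, n)) i j := \sum_(k < m | k != i) s k j ^+ 2.
Definition Phi (s : 'M[R]_(m, n)) :=
  \sum_(j < n) (\sum_(k < m) s k j
     - ((\sum_(k < m) s k j) ^+ 2 + \sum_(k < m) s k j ^+ 2) / (2 * d j)).

Lemma Phi_cont : continuous (fun v : 'rV[R]_(m * n) => Phi (vec_mx v)).
Proof.
rewrite /Phi; cont.
Qed.

Lemma colsum_split (s : 'M[R]_(m, n)) i j : \sum_(k < m) s k j = s i j + Yo s i j.
Proof. by rewrite (bigD1 i). Qed.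

Lemma colsum_dev s i (x : 'I_n -> R) j :
  \sum_(k < m) deviate s i x k j = x j + Yo s i j.
Proof.
rewrite (bigD1 i) //= mxE eqxx; congr (_ + _); apply: eq_bigr => k /negPf kn.
by rewrite mxE kn.
Qed.

Lemma sq_dev s i (x : 'I_n -> R) j :
  \sum_(k < m) deviate s i x k j ^+ 2 = x j ^+ 2 + Qo s i j.
Proof.
rewrite (bigD1 i) //= mxE eqxx; congr (_ + _); apply: eq_bigr => k /negPf kn.
by rewrite mxE kn.
Qed.

Lemma dev_self (s : 'M[R]_(m, n)) i : deviate s i (fun j => s i j) = s.
Proof. by apply/matrixP => k j; rewrite mxE; case: eqP => // ->. Qed.

Hypothesis dpos : forall j, 0 < d j.
Variables rmax rmin : R.

Lemma util_dev s i x : utility d rmax rmin (deviate s i x) i =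
  (rmax - rmin) * \sum_(j < n) x j * (1 - (x j + Yo s i j) / d j).
Proof.
rewrite /utility mulr_sumr; apply: eq_bigr => j _.
rewrite /rate colsum_dev mxE eqxx.
have := dpos j; rewrite lt0r => /andP [dj _].
by field.
Qed.

Lemma util_Phi s i x : utility d rmax rmin (deviate s i x) i =
  (rmax - rmin) * Phi (deviate s i x) +
  (rmax - rmin) * \sum_(j < n) (- Yo s i j + (Yo s i j ^+ 2 + Qo s i j) / (2 * d j)).
Proof.
rewrite util_dev /Phi -mulrDr -big_split; congr (_ * _); apply: eq_bigr => j _ /=.
rewrite colsum_dev sq_dev.
have := dpos j; rewrite lt0r => /andP [dj _].
by field.
Qed.


Variable c : 'I_m -> R.

Lemma feas_dev (s : 'M[R]_(m, n)) i x : feasible c s -> feasible_row (c i) x -> feasible c (deviate s i x).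
Proof.
move=> fs [x0 xs] k; rewrite /feasible_row.
under eq_bigr do rewrite mxE.
case: (eqVneq k i) => [->|ki].
  by split => // j; rewrite mxE eqxx.
have [h1 h2] := fs k.
by split => // j; rewrite mxE (negPf ki).
Qed.

Hypothesis a0 : 0 < rmax - rmin.

Definition Gt (s t : 'M[R]_(m, n)) i j :=
  4 * (t i j - s i j) * (1 - (s i j + \sum_(k < m) s k j) / d j)
      - (t i j - s i j) ^+ 2 / d j.

Lemma VI (s t : 'M[R]_(m, n)) i : pure_NE c d rmax rmin s -> feasible c t ->
  \sum_(j < n) Gt s t i j <= 0.
Proof.
move=> [fs ne] ft; rewrite /Gt.
pose x := fun j => (3 * s i j + t i j) / 4.
have [s0 ss] := fs i; have [t0 ts] := ft i.
have fx : feasible_row (c i) x.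
  split => [j|].
    by rewrite /x divr_ge0 // addr_ge0 // mulr_ge0.
  rewrite /x -mulr_suml big_split /= -mulr_sumr.
  have := ss; have := ts; move: (\sum_(j < n) s i j) (\sum_(j < n) t i j) => S T.
  move=> h1 h2; lra.
have := ne i x fx.
rewrite -{2}(dev_self s i) !util_dev (ler_pM2l a0) -subr_le0 -sumrB.
move=> H.
have -> : \sum_(j < n) (4 * (t i j - s i j) * (1 - (s i j + \sum_(k < m) s k j) / d j)
      - (t i j - s i j) ^+ 2 / d j) =
  16 * \sum_(j < n) (x j * (1 - (x j + Yo s i j) / d j) -
                     s i j * (1 - (s i j + Yo s i j) / d j)).
  rewrite mulr_sumr; apply: eq_bigr => j _.
  rewrite (colsum_split s i j) /x.
  have := dpos j; rewrite lt0r => /andP [dj _].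
  by field.
by rewrite pmulr_rle0.
Qed.

Lemma uniq_NE (s t : 'M[R]_(m, n)) : pure_NE c d rmax rmin s -> pure_NE c d rmax rmin t -> s = t.
Proof.
move=> sNE tNE.
pose del i j := t i j - s i j.
pose D j := \sum_(k < m) del k j.
have h1 : \sum_(i < m) \sum_(j < n) Gt s t i j <= 0.
  by apply: sumr_le0 => i _; apply: VI => //; case: tNE.
have h2 : \sum_(i < m) \sum_(j < n) Gt t s i j <= 0.
  by apply: sumr_le0 => i _; apply: VI => //; case: sNE.
have E : \sum_(i < m) \sum_(j < n) Gt s t i j + \sum_(i < m) \sum_(j < n) Gt t s i j
   = \sum_(j < n) (\sum_(i < m) 2 * del i j ^+ 2 / d j + D j * (4 * D j / d j)).
  rewrite -big_split; under eq_bigr do rewrite -big_split.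
  rewrite exchange_big /=; apply: eq_bigr => j _.
  rewrite /D mulr_suml -big_split /=; apply: eq_bigr => i _.
  rewrite /Gt /del.
  have -> : \sum_(k < m) t k j = \sum_(k < m) s k j + \sum_(k < m) (t k j - s k j).
    by rewrite sumrB addrC subrK.
  have := dpos j; rewrite lt0r => /andP [dj _].
  set Z := \sum_(k < m) (t k j - s k j).
  by field.
have H : \sum_(j < n) (\sum_(i < m) 2 * del i j ^+ 2 / d j + D j * (4 * D j / d j)) <= 0.
  by rewrite -E; lra.
have T0 : forall i j, 0 <= 2 * del i j ^+ 2 / d j.
  by move=> i j; apply: divr_ge0; [by rewrite mulr_ge0 // sqr_ge0 | exact: ltW].
have P0 : forall j, 0 <= \sum_(i < m) 2 * del i j ^+ 2 / d j + D j * (4 * D j / d j).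
  move=> j; rewrite addr_ge0 //; first by apply: sumr_ge0 => i _; exact: T0.
  have -> : D j * (4 * D j / d j) = 4 * D j ^+ 2 / d j by rewrite expr2; ring.
  by apply: divr_ge0; [by rewrite mulr_ge0 // sqr_ge0 | exact: ltW].
have Hsum : \sum_(j < n) (\sum_(i < m) 2 * del i j ^+ 2 / d j + D j * (4 * D j / d j)) = 0.
  by apply/le_anti; rewrite H sumr_ge0 // => j _; exact: P0.
have Fj0 := psumr_eq0P (fun j _ => P0 j) Hsum.
have A0 : forall j, 0 <= \sum_(i < m) 2 * del i j ^+ 2 / d j.
  by move=> j; apply: sumr_ge0 => k _; exact: T0.
have B0 : forall j, 0 <= D j * (4 * D j / d j).
  move=> j; have -> : D j * (4 * D j / d j) = 4 * D j ^+ 2 / d j by rewrite expr2; ring.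
  by apply: divr_ge0; [by rewrite mulr_ge0 // sqr_ge0 | exact: ltW].
apply/matrixP => i j.
have /eqP := Fj0 j isT; rewrite paddr_eq0 //.
case/andP => /eqP S _.
have X : 2 * del i j ^+ 2 / d j = 0.
  by apply: (psumr_eq0P _ S) => // k _; exact: T0.
have := dpos j; rewrite lt0r => /andP [dj _].
have : del i j ^+ 2 = (2 * del i j ^+ 2 / d j) * d j / 2 by field.
rewrite X !mul0r => /eqP; rewrite sqrf_eq0 /del subr_eq0 => /eqP ->.
done.
Qed.
End Alg.

Theorem theorem3p3 (R : realType) (m n : nat) (c : 'I_m -> R) (d : 'I_n -> R)
  (rmax rmin : R) :
  (0 < m)%N -> (0 < n)%N ->
  (forall i, 0 < c i) -> (forall j, 0 < d j) ->
  0 < rmin -> rmin < rmax ->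
  exists! s : 'M[R]_(m, n), pure_NE c d rmax rmin s.
Proof.
move=> m0 n0 cpos dpos rmin0 rlt.
have a0 : 0 < rmax - rmin by rewrite subr_gt0.
have [s fs smax] := @exists_max R m n c (@Phi R m n d) (fun i => ltW (cpos i)) (@Phi_cont R m n d).
have sNE : pure_NE c d rmax rmin s.
  split => // i x fx.
  have E := @util_Phi R m n d dpos rmax rmin s i (fun j => s i j).
  rewrite (@dev_self R m n s i) in E.
  rewrite (@util_Phi R m n d dpos rmax rmin s i x) E lerD2r (ler_pM2l a0).
  by apply: smax; apply: (@feas_dev R m n c).

exists s; split => // t tNE.
exact: (@uniq_NE R m n d dpos rmax rmin c a0 s t sNE tNE).
Qed.
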